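(* Let $n,N\in\mathbb N$, $I=\{1,\dots,n\}$, $J=\{1,\dots,N\}$, $a=(a_{ij})\in\mathbb R^{n\times N}$, and $1\le p<\infty$. Let $G$ be a nonempty finite set of maps from $I$ to $J$ and $C_G>0$ a constant depending only on $G$ such that for all $i\in I$, $j\in J$ and all pairs $(i_1,j_1)\ne(i_2,j_2)$ in $I\times J$: (i) $\mathbb P(\{g\in G: g(i)=j\})=1/N$; (ii) $\mathbb P(\{g\in G: g(i_1)=j_1,\ g(i_2)=j_2\})\le C_G/N^2$. Then $$C\Big[\frac1N\sum_{k=1}^N s(k)+\Big(\frac1N\sum_{k=N+1}^{nN}s(k)^p\Big)^{1/p}\Big]\le \mathbb E\Big(\sum_{i=1}^n|a_{ig(i)}|^p\Big)^{1/p}\le \frac1N\sum_{k=1}^N s(k)+\Big(\frac1N\sum_{k=N+1}^{nN}s(k)^p\Big)^{1/p},$$ where $C>0$ is a constant depending only on $C_G$.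
   Context: $\mathbb P$ denotes the normalized counting measure on $G$, i.e. $\mathbb P(E)=|E|/|G|$, and $\mathbb E$ the expectation with respect to $\mathbb P$ (over $g\in G$). $(s(k))_{k=1}^{nN}$ is the non-increasing rearrangement of the $nN$ numbers $(|a_{ij}|)_{i\in I,j\in J}$. *)

(* Defs.v *)
From mathcomp Require Import all_boot.
From Stdlib Require Import Reals.
Set Implicit Arguments. Unset Strict Implicit. Unset Printing Implicit Defensive.

Local Open Scope R_scope.

(* x ^ y for real y and x >= 0, with the convention 0 ^ y = 0 (y > 0).
   (Stdlib's Rpower 0 y is exp (y * ln 0) = 1, hence the wrapper.) *)
Definition rpow (x y : R) : R := if Rle_dec x 0 then 0 else Rpower x y.

Definition Prob (n N : nat) (G : {set {ffun 'I_n -> 'I_N}})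
  (E : pred {ffun 'I_n -> 'I_N}) : R :=
  INR #|[set g in G | E g]| / INR #|G|.

Definition Expect (n N : nat) (G : {set {ffun 'I_n -> 'I_N}})
  (f : {ffun 'I_n -> 'I_N} -> R) : R :=
  (\big[Rplus/0]_(g in G) f g) / INR #|G|.

Definition Rgeb (x y : R) : bool := if Rle_dec y x then true else false.

(* the non-increasing rearrangement of the nN numbers |a_ij|, as a list;
   s(k) (1-based, as in the paper) is  nth 0 (srearr a) (k-1). *)
Definition srearr (n N : nat) (a : 'I_n -> 'I_N -> R) : seq R :=
  sort Rgeb [seq Rabs (a i j) | i <- enum 'I_n, j <- enum 'I_N].

Definition s_at (n N : nat) (a : 'I_n -> 'I_N -> R) (k : nat) : R :=
  nth 0 (srearr a) k.  (* 0-based: s_at a k = s(k+1) *)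

Definition bound_expr (n N : nat) (a : 'I_n -> 'I_N -> R) (p : R) : R :=
  (\big[Rplus/0]_(0 <= k < N) s_at a k) / INR N
  + rpow ((\big[Rplus/0]_(N <= k < n * N) rpow (s_at a k) p) / INR N) (/ p).

(* Main.v *)
From HB Require Import structures.
Require Import Defs.
From mathcomp Require Import all_boot.
From Stdlib Require Import Reals.
From Stdlib Require Import Lra Psatz.
From mathcomp Require Import zify.
Set Implicit Arguments.
Local Open Scope R_scope.


Lemma exp_le x y : x <= y -> exp x <= exp y.
Proof. intros [H|H]; [left; apply exp_increasing; auto | subst; lra]. Qed.
Lemma ln_le x y : 0 < x -> x <= y -> ln x <= ln y.
Proof. intros Hx [H|H]; [left; apply ln_increasing; auto | subst; lra]. Qed.

Lemma rpow_ge0 x y : 0 <= rpow x y.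
Proof. unfold rpow; destruct (Rle_dec x 0); simpl; [lra|]. unfold Rpower; left; apply exp_pos. Qed.
Lemma rpow0 y : rpow 0 y = 0.
Proof. unfold rpow; destruct (Rle_dec 0 0); simpl; lra. Qed.
Lemma rpow_pos x y : 0 < x -> rpow x y = Rpower x y.
Proof. unfold rpow; destruct (Rle_dec x 0); simpl; lra. Qed.
Lemma rpow_gt0 x y : 0 < x -> 0 < rpow x y.
Proof. intros; rewrite rpow_pos //; apply exp_pos. Qed.

Lemma rpow_inv x p : 0 <= x -> 0 < p -> rpow (rpow x p) (/p) = x.
Proof.
intros [Hx|Hx] Hp; [|subst; rewrite !rpow0 //].
rewrite (rpow_pos p Hx) rpow_pos; [|apply exp_pos].
rewrite Rpower_mult Rinv_r; [apply Rpower_1; auto|lra].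
Qed.

Lemma rpow_mul x y q : 0 <= x -> 0 <= y -> rpow (x*y) q = rpow x q * rpow y q.
Proof.
intros [Hx|Hx] [Hy|Hy]; try (subst; rewrite ?Rmult_0_l ?Rmult_0_r !rpow0; lra).
rewrite !rpow_pos; [|auto|auto|nra]. symmetry; apply Rpower_mult_distr; auto.
Qed.

Lemma rpow_le x y q : 0 <= q -> 0 <= x <= y -> rpow x q <= rpow y q.
Proof.
intros Hq [[Hx|Hx] Hxy]; [|subst; rewrite rpow0; apply rpow_ge0].
rewrite !rpow_pos; [|lra|lra]. unfold Rpower. apply exp_le, Rmult_le_compat_l; auto.
apply ln_le; auto.
Qed.

Lemma rpow_ge_id x q : 0 < q <= 1 -> 0 <= x <= 1 -> x <= rpow x q.
Proof.
intros Hq [[Hx|Hx] H1]; [|subst; rewrite rpow0; lra].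
rewrite rpow_pos //. rewrite <- (exp_ln x) at 1; auto. unfold Rpower. apply exp_le.
assert (ln x <= 0) by (rewrite <- ln_1; apply ln_le; lra). nra.
Qed.

Lemma rpow_ge1 x q : 0 <= q -> 1 <= x -> 1 <= rpow x q.
Proof.
intros Hq Hx. rewrite rpow_pos; [|lra]. unfold Rpower. rewrite <- exp_0. apply exp_le.
assert (0 <= ln x) by (rewrite <- ln_1; apply ln_le; lra). nra.
Qed.

Lemma rpow_quad t q : 0 < q <= 1 -> 0 <= t -> t - t*t/4 <= rpow t q.
Proof.
intros Hq Ht. destruct (Rle_dec t 1).
- pose proof (rpow_ge_id Hq (conj Ht r)). nra.
- assert (1 <= rpow t q) by (apply rpow_ge1; lra). pose proof (Rle_0_sqr (t-2)). unfold Rsqr in *. lra.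
Qed.

Lemma rpow_small x q : 0 < q <= 1 -> 0 <= x -> Rmin x 1 <= rpow x q.
Proof.
intros Hq Ht. destruct (Rle_dec x 1).
- rewrite Rmin_left //. apply rpow_ge_id; lra.
- rewrite Rmin_right; [|lra]. apply rpow_ge1; lra.
Qed.

Lemma Rpower1l q : Rpower 1 q = 1.
Proof. unfold Rpower; rewrite ln_1 Rmult_0_r exp_0 //. Qed.

Lemma bernoulli s q : 0 < q <= 1 -> 0 <= s -> rpow s q <= 1 + q * (s - 1).
Proof.
intros Hq [Hs|Hs]; [|subst; rewrite rpow0; nra].
rewrite rpow_pos //.
destruct (Rtotal_order s 1) as [Hl|[He|Hg]].
- destruct (MVT_cor2 (fun x => Rpower x q) (fun x => q * Rpower x (q - 1)) s 1 Hl)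
    as [c [Hc1 Hc2]].
  { intros c Hc; apply derivable_pt_lim_power; lra. }
  cbv beta in Hc1; rewrite Rpower1l in Hc1.
  assert (1 <= Rpower c (q - 1)).
  { unfold Rpower. apply Rle_trans with (exp 0); [rewrite exp_0; lra|]. apply exp_le.
    assert (ln c <= 0) by (rewrite <- ln_1; apply ln_le; lra). nra. }
  assert (0 <= q*(1-s)) by nra. nra.
- subst. rewrite Rpower1l; lra.
- destruct (MVT_cor2 (fun x => Rpower x q) (fun x => q * Rpower x (q - 1)) 1 s Hg)
    as [c [Hc1 Hc2]].
  { intros c Hc; apply derivable_pt_lim_power; lra. }
  cbv beta in Hc1; rewrite Rpower1l in Hc1.
  assert (Rpower c (q - 1) <= 1).
  { unfold Rpower. apply Rle_trans with (exp 0); [|rewrite exp_0; lra]. apply exp_le.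
    assert (0 <= ln c) by (rewrite <- ln_1; apply ln_le; lra). nra. }
  assert (0 <= q*(s-1)) by nra. nra.
Qed.

Lemma rpow_subadd a b q : 0 < q <= 1 -> 0 <= a -> 0 <= b ->
  rpow (a + b) q <= rpow a q + rpow b q.
Proof.
intros Hq Ha Hb. destruct (Req_dec (a + b) 0) as [H0|H0].
{ assert (a = 0) by lra; assert (b = 0) by lra; subst. rewrite Rplus_0_l rpow0; lra. }
set t := a + b.
assert (Ht : 0 < t) by (unfold t; lra).
assert (0 <= a / t) by (unfold Rdiv; apply Rmult_le_pos; [lra|left; apply Rinv_0_lt_compat; lra]).
assert (0 <= b / t) by (unfold Rdiv; apply Rmult_le_pos; [lra|left; apply Rinv_0_lt_compat; lra]).
assert (a / t + b / t = 1) by (unfold t; field; lra).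
assert (Ea : rpow a q = rpow (a/t) q * rpow t q).
{ rewrite <- rpow_mul; [|lra|lra]. f_equal. field; lra. }
assert (Eb : rpow b q = rpow (b/t) q * rpow t q).
{ rewrite <- rpow_mul; [|lra|lra]. f_equal. field; lra. }
rewrite Ea Eb.
assert (a/t <= rpow (a/t) q) by (apply rpow_ge_id; lra).
assert (b/t <= rpow (b/t) q) by (apply rpow_ge_id; lra).
pose proof (rpow_ge0 t q). nra.
Qed.


Lemma Rplus_assoc' : associative Rplus. Proof. move=> x y z; lra. Qed.
Lemma Rplus_comm' : commutative Rplus. Proof. move=> x y; lra. Qed.
Lemma Rplus_0_l' : left_id 0 Rplus. Proof. move=> x; lra. Qed.
HB.instance Definition _ := Monoid.isComLaw.Build R 0 Rplus Rplus_assoc' Rplus_comm' Rplus_0_l'.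

Section Sums.
Variable I : Type.

Lemma sumR_le (r : seq I) (P : pred I) (F H : I -> R) :
  (forall i, P i -> F i <= H i) ->
  \big[Rplus/0]_(i <- r | P i) F i <= \big[Rplus/0]_(i <- r | P i) H i.
Proof. move=> h; apply: (big_ind2 (fun x y => x <= y)) => //; [lra| move=> *; lra]. Qed.

Lemma sumR_ge0 (r : seq I) (P : pred I) (F : I -> R) :
  (forall i, P i -> 0 <= F i) -> 0 <= \big[Rplus/0]_(i <- r | P i) F i.
Proof. move=> h; apply: (big_ind (fun x => 0 <= x)) => //; [lra| move=> *; lra]. Qed.

Lemma sumR_scal (r : seq I) (P : pred I) (F : I -> R) c :
  \big[Rplus/0]_(i <- r | P i) (c * F i) = c * \big[Rplus/0]_(i <- r | P i) F i.
Proof.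
apply: (big_ind2 (fun x y => x = c * y)) => //; [lra| move=> ? ? ? ? -> ->; lra].
Qed.

Lemma sumR_scalr (r : seq I) (P : pred I) (F : I -> R) c :
  \big[Rplus/0]_(i <- r | P i) (F i * c) = \big[Rplus/0]_(i <- r | P i) F i * c.
Proof.
apply: (big_ind2 (fun x y => x = y * c)) => //; [lra| move=> ? ? ? ? -> ->; lra].
Qed.

Lemma sumR_split (r : seq I) (P : pred I) (F H : I -> R) :
  \big[Rplus/0]_(i <- r | P i) (F i + H i) =
  \big[Rplus/0]_(i <- r | P i) F i + \big[Rplus/0]_(i <- r | P i) H i.
Proof. exact: big_split. Qed.
End Sums.

Lemma iter_Rplus k c : iter k (Rplus c) 0 = INR k * c.
Proof. elim: k => [|k IH]; [simpl; lra|]. rewrite S_INR. change (c + iter k (Rplus c) 0 = (INR k + 1) * c). rewrite IH; lra. Qed.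

Lemma sumR_const (T : finType) (A : {pred T}) c :
  \big[Rplus/0]_(i in A) c = INR #|A| * c.
Proof. by rewrite big_const iter_Rplus. Qed.

Lemma sumR_term (T : finType) (P : pred T) (F : T -> R) j :
  (forall i, P i -> 0 <= F i) -> P j -> F j <= \big[Rplus/0]_(i | P i) F i.
Proof.
move=> h Pj; rewrite (bigD1 j) //=.
have := sumR_ge0 (index_enum T) (fun i => P i && (i != j)) F (fun i hi => h i (proj1 (andP hi))).
lra.
Qed.

Lemma sumR_sub (T : finType) (P : pred T) (F : T -> R) :
  (forall i, 0 <= F i) -> \big[Rplus/0]_(i | P i) F i <= \big[Rplus/0]_i F i.
Proof.
move=> h; rewrite [X in _ <= X](bigID P) /=.
have := sumR_ge0 (index_enum T) (fun i => ~~ P i) F (fun i _ => h i). lra.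
Qed.

Lemma sumR_pred1 (T : finType) (F : T -> R) j :
  \big[Rplus/0]_i (if i == j then F i else 0) = F j.
Proof. by rewrite -big_mkcond big_pred1_eq. Qed.


Definition hit n N (g : {ffun 'I_n -> 'I_N}) (e : 'I_n * 'I_N) : bool := g e.1 == e.2.
Definition ind (b : bool) : R := if b then 1 else 0.

Section Core.
Variables (n N : nat) (G : {set {ffun 'I_n -> 'I_N}}) (CG : R).
Local Notation T := ('I_n * 'I_N)%type.
Local Notation KG := (INR #|G|).
Local Notation NR := (INR N).
Hypothesis KGpos : 0 < KG.
Hypothesis NRpos : 0 < NR.
Hypothesis CGpos : 0 < CG.
Hypothesis H1 : forall e : T, INR #|[set g in G | hit g e]| = KG / NR.
Hypothesis H12 : forall e e' : T,
  INR #|[set g in G | hit g e && hit g e']| <= KG * (ind (e' == e) / NR + CG / (NR * NR)).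

Lemma sum_ind (b : pred {ffun 'I_n -> 'I_N}) c :
  \big[Rplus/0]_(g in G) (c * ind (b g)) = c * INR #|[set g in G | b g]|.
Proof.
rewrite sumR_scal; congr (_ * _).
transitivity (\big[Rplus/0]_(g in G | b g) 1).
  by rewrite big_mkcondr; apply: eq_bigr => g _; rewrite /ind; case: (b g).
rewrite -[INR _]Rmult_1_r -sumR_const; apply: eq_bigl => g; by rewrite inE.
Qed.

Lemma first_moment (A : {pred T}) (F : T -> R) :
  \big[Rplus/0]_(g in G) \big[Rplus/0]_(e in A) (F e * ind (hit g e))
  = KG / NR * \big[Rplus/0]_(e in A) F e.
Proof.
rewrite exchange_big /= -sumR_scal; apply: eq_bigr => e _.
by rewrite sum_ind H1 Rmult_comm.
Qed.

Lemma second_moment (A B : {pred T}) (F H : T -> R) :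
  (forall e, 0 <= F e) -> (forall e, 0 <= H e) ->
  \big[Rplus/0]_(g in G) ((\big[Rplus/0]_(e in A) (F e * ind (hit g e))) *
                          (\big[Rplus/0]_(e in B) (H e * ind (hit g e))))
  <= KG * \big[Rplus/0]_(e in A) (F e * (H e / NR + CG / (NR * NR) * \big[Rplus/0]_(e' in B) H e')).
Proof.
move=> F0 H0.
have E1 : forall g, (\big[Rplus/0]_(e in A) (F e * ind (hit g e))) *
                          (\big[Rplus/0]_(e in B) (H e * ind (hit g e)))
   = \big[Rplus/0]_(e in A) \big[Rplus/0]_(e' in B) (F e * H e' * ind (hit g e && hit g e')).
  move=> g; rewrite -sumR_scalr; apply: eq_bigr => e _.
  rewrite -sumR_scal; apply: eq_bigr => e' _.
  rewrite /ind; case: (hit g e); case: (hit g e') => /=; lra.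
rewrite (eq_bigr _ (fun g _ => E1 g)) exchange_big /= -sumR_scal.
apply: sumR_le => e _.
rewrite exchange_big /=.
apply: Rle_trans.
  apply: (@sumR_le _ _ _ _ (fun e' => F e * H e' * (KG * (ind (e' == e) / NR + CG / (NR * NR))))).
  move=> e' _; rewrite sum_ind; apply: Rmult_le_compat_l; last exact: H12.
  by apply: Rmult_le_pos.
have E2 : forall e', F e * H e' * (KG * (ind (e' == e) / NR + CG / (NR * NR))) =
   KG * F e * (/ NR * (H e' * ind (e' == e)) + CG / (NR * NR) * H e').
  move=> e'; field; lra.
rewrite (eq_bigr _ (fun e' _ => E2 e')) sumR_scal sumR_split !sumR_scal.
have E3 : \big[Rplus/0]_(e' in B) (H e' * ind (e' == e)) <= H e.
  apply: Rle_trans; first by apply: sumR_sub => e'; rewrite /ind; case: (_ == _); have := H0 e'; lra.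
  rewrite -[X in _ <= X](@sumR_pred1 _ H e); apply: sumR_le => e' _.
  rewrite /ind; case: (_ == _); lra.
have HF := F0 e. have HK := KGpos.
have : 0 <= / NR by left; apply: Rinv_0_lt_compat.
have : 0 <= KG * F e by apply: Rmult_le_pos; lra.
move=> h1 h2.
have -> : KG * (F e * (H e / NR + CG / (NR * NR) * \big[Rplus/0]_(e'0 in B) H e'0))
  = KG * F e * (/ NR * H e + CG / (NR * NR) * \big[Rplus/0]_(e'0 in B) H e'0) by field; lra.
apply: Rmult_le_compat_l => //; apply: Rplus_le_compat_r; apply: Rmult_le_compat_l => //.
Qed.

End Core.


Lemma rpow_sum_subadd (I : finType) (A : {pred I}) (F : I -> R) q :
  0 < q <= 1 -> (forall i, 0 <= F i) ->
  rpow (\big[Rplus/0]_(i in A) F i) q <= \big[Rplus/0]_(i in A) rpow (F i) q.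
Proof.
move=> Hq F0.
suff: 0 <= \big[Rplus/0]_(i in A) F i /\
   rpow (\big[Rplus/0]_(i in A) F i) q <= \big[Rplus/0]_(i in A) rpow (F i) q by case.
apply: (big_ind2 (fun x y => 0 <= x /\ rpow x q <= y)).
- rewrite rpow0; lra.
- move=> x1 x2 y1 y2 [h1 h2] [h3 h4]; split; first lra.
  apply: Rle_trans; first exact: rpow_subadd. lra.
- move=> i _; split; [exact: F0| lra].
Qed.

Lemma conv_sum n N (F : 'I_n -> 'I_N -> R) (g : {ffun 'I_n -> 'I_N}) :
  \big[Rplus/0]_(i < n) F i (g i) =
  \big[Rplus/0]_(e : 'I_n * 'I_N) (F e.1 e.2 * ind (hit g e)).
Proof.
rewrite -(pair_big xpredT xpredT (fun i j => F i j * ind (hit g (i, j)))) /=.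
apply: eq_bigr => i _.
rewrite -[LHS](@sumR_pred1 _ (F i) (g i)); apply: eq_bigr => j _.
rewrite /ind /hit /= eq_sym; case: (_ == _); lra.
Qed.

Section Core2.
Variables (n N : nat) (G : {set {ffun 'I_n -> 'I_N}}) (CG : R).
Local Notation T := ('I_n * 'I_N)%type.
Local Notation KG := (INR #|G|).
Local Notation NR := (INR N).
Hypothesis KGpos : 0 < KG.
Hypothesis NRpos : 0 < NR.
Hypothesis CGpos : 0 < CG.
Hypothesis H1 : forall e : T, INR #|[set g in G | hit g e]| = KG / NR.
Hypothesis H12 : forall e e' : T,
  INR #|[set g in G | hit g e && hit g e']| <= KG * (ind (e' == e) / NR + CG / (NR * NR)).

Lemma ind_ge0 b : 0 <= ind b. Proof. rewrite /ind; case: b; lra. Qed.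

Lemma jensen (X : {ffun 'I_n -> 'I_N} -> R) q : 0 < q <= 1 ->
  (forall g, g \in G -> 0 <= X g) ->
  \big[Rplus/0]_(g in G) rpow (X g) q <= KG * rpow ((\big[Rplus/0]_(g in G) X g) / KG) q.
Proof.
move=> Hq X0.
set m := (\big[Rplus/0]_(g in G) X g) / KG.
have m0 : 0 <= m.
  rewrite /m /Rdiv; apply: Rmult_le_pos; first exact: sumR_ge0.
  left; exact: Rinv_0_lt_compat.
case: m0 => m0; last first.
  rewrite -m0 rpow0 Rmult_0_r.
  have Hs : \big[Rplus/0]_(g in G) X g = 0.
    have : m * KG = \big[Rplus/0]_(g in G) X g by rewrite /m; field; lra.
    rewrite -m0; lra.
  have -> : \big[Rplus/0]_(g in G) rpow (X g) q = \big[Rplus/0]_(g in G) 0.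
    apply: eq_bigr => g gG.
    have : X g <= 0 by rewrite -Hs; apply: (@sumR_term _ (fun g => g \in G) X g) => // g1; exact: X0.
    have := X0 g gG => ??; have -> : X g = 0 by lra. by rewrite rpow0.
  rewrite sumR_const; lra.
apply: Rle_trans.
  apply: (@sumR_le _ _ _ _ (fun g => rpow m q * (1 - q) + (rpow m q * q / m) * X g)).
  move=> g gG.
  have -> : X g = (X g / m) * m by field; lra.
  rewrite rpow_mul; last lra; last first.
    rewrite /Rdiv; apply: Rmult_le_pos; [exact: X0|left; exact: Rinv_0_lt_compat].
  have := bernoulli Hq (s := X g / m) ltac:(apply: Rmult_le_pos; [exact: X0|left; exact: Rinv_0_lt_compat]).
  have := rpow_ge0 m q.
  move=> h1 h2.
  have : rpow (X g / m) q * rpow m q <= (1 + q * (X g / m - 1)) * rpow m q.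
    by apply: Rmult_le_compat_r.
  move=> h3; apply: (Rle_trans _ _ _ h3); right; field; lra.
rewrite sumR_split sumR_const sumR_scal.
have : \big[Rplus/0]_(g in G) X g = m * KG by rewrite /m; field; lra.
move=> h3; rewrite h3; clearbody m; right; set K := INR _; set r := rpow m q; field; lra.
Qed.


Lemma termA (L : {pred T}) (v : T -> R) (M : {ffun 'I_n -> 'I_N} -> R) :
  (forall e, 0 <= v e) -> INR #|L| <= NR ->
  (forall g, g \in G -> 0 <= M g) ->
  (forall g e, g \in G -> e \in L -> hit g e -> v e <= M g) ->
  KG * (\big[Rplus/0]_(e in L) v e) / (NR * (1 + CG)) <= \big[Rplus/0]_(g in G) M g.
Proof.
move=> v0 HL M0 Mv.
set c := 1 + CG.
have c0 : 0 < c by rewrite /c; lra.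
pose Y g := \big[Rplus/0]_(e in L) (v e * ind (hit g e)).
pose Z g := \big[Rplus/0]_(e in L) ((fun _ => 1) e * ind (hit g e)).
have pw : forall g, g \in G -> (2 / c) * Y g + (- / (c * c)) * (Y g * Z g) <= M g.
  move=> g gG.
  have Y0 : 0 <= Y g by apply: sumR_ge0 => e _; apply: Rmult_le_pos => //; exact: ind_ge0.
  have Z0 : 0 <= Z g by apply: sumR_ge0 => e _; apply: Rmult_le_pos; [lra|exact: ind_ge0].
  have YZ : Y g <= M g * Z g.
    rewrite /Z -sumR_scal; apply: sumR_le => e eL.
    rewrite /ind; case Hh: (hit g e); last lra.
    have := Mv g e gG eL Hh; lra.
  have HM := M0 g gG.
  have : Y g * (2 * c - Z g) <= c * c * M g.
    case: (Rle_dec (Z g) (2 * c)) => hz.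
      have : Y g * (2 * c - Z g) <= M g * Z g * (2 * c - Z g) by apply: Rmult_le_compat_r; lra.
      have : 0 <= M g * ((c - Z g) * (c - Z g)) by apply: Rmult_le_pos; [exact: HM| exact: Rle_0_sqr].
      nra.
    have : Y g * (2 * c - Z g) <= 0 by nra.
    have : 0 <= c * c * M g by apply: Rmult_le_pos => //; nra.
    lra.
  move=> h.
  have -> : 2 / c * Y g + - / (c * c) * (Y g * Z g) = (Y g * (2 * c - Z g)) / (c * c) by field; lra.
  apply: (Rmult_le_reg_r (c * c)); first nra.
  have -> : Y g * (2 * c - Z g) / (c * c) * (c * c) = Y g * (2 * c - Z g) by field; lra.
  lra.
apply: Rle_trans; last by apply: sumR_le; exact: pw.
rewrite sumR_split !sumR_scal.
have EY : \big[Rplus/0]_(g in G) Y g = KG / NR * \big[Rplus/0]_(e in L) v e by exact: first_moment.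
have EYZ := @second_moment _ _ G CG KGpos NRpos H12 L L v (fun _ => 1) v0 (fun _ => Rle_0_1).
rewrite -/Y -/Z in EYZ.
set S := \big[Rplus/0]_(e in L) v e.
have S0 : 0 <= S by apply: sumR_ge0.
have EYZ' : \big[Rplus/0]_(g in G) (Y g * Z g) <= KG * S * (c / NR).
  apply: (Rle_trans _ _ _ EYZ).
  rewrite Rmult_assoc -sumR_scalr; apply: Rmult_le_compat_l; first lra.
  apply: sumR_le => e _; apply: Rmult_le_compat_l; first exact: v0.
  rewrite sumR_const.
  have : CG / (NR * NR) * (INR #|L| * 1) <= CG / NR.
    have -> : CG / NR = CG / (NR * NR) * NR by field; lra.
    apply: Rmult_le_compat_l; last lra.
    rewrite /Rdiv; apply: Rmult_le_pos; first lra.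
    left; apply: Rinv_0_lt_compat; nra.
  have -> : c / NR = 1 / NR + CG / NR by rewrite /c; field; lra.
  move=> ?; apply: Rplus_le_compat_l; assumption.
rewrite EY.
have : 0 <= / (c * c) by left; apply: Rinv_0_lt_compat; nra.
move=> hc.
have : / (c * c) * \big[Rplus/0]_(g in G) (Y g * Z g) <= / (c * c) * (KG * S * (c / NR)).
  by apply: Rmult_le_compat_l.
move=> h.
have -> : KG * S / (NR * c) = 2 / c * (KG / NR * S) - / (c * c) * (KG * S * (c / NR)).
  by field; lra.
rewrite -/S; lra.
Qed.

Lemma termB (Rs : {pred T}) (w : T -> R) (beta q : R) (X : {ffun 'I_n -> 'I_N} -> R) :
  0 < q <= 1 -> (forall e, 0 <= w e) ->
  (forall e, e \in Rs -> w e <= beta) ->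
  (forall g, X g = \big[Rplus/0]_(e in Rs) (w e * ind (hit g e))) ->
  0 < (\big[Rplus/0]_(e in Rs) w e) / NR ->
  beta <= (\big[Rplus/0]_(e in Rs) w e) / NR ->
  KG * rpow ((\big[Rplus/0]_(e in Rs) w e) / NR) q / (2 * (1 + CG))
    <= \big[Rplus/0]_(g in G) rpow (X g) q.
Proof.
move=> Hq w0 wb XE m0 bm.
set W := \big[Rplus/0]_(e in Rs) w e in m0 bm *.
set m := W / NR in m0 bm *.
set c := 1 + CG.
have c0 : 0 < c by rewrite /c; lra.
set mu := c / 2 * m.
have mu0 : 0 < mu by rewrite /mu; nra.
have X0 : forall g, 0 <= X g.
  by move=> g; rewrite XE; apply: sumR_ge0 => e _; apply: Rmult_le_pos => //; exact: ind_ge0.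
have pw : forall g, g \in G ->
   rpow mu q * / mu * X g + (- (rpow mu q / (4 * mu * mu))) * (X g * X g) <= rpow (X g) q.
  move=> g _.
  have -> : X g = (X g / mu) * mu by field; lra.
  have xm0 : 0 <= X g / mu by rewrite /Rdiv; apply: Rmult_le_pos; [exact: X0|left; exact: Rinv_0_lt_compat].
  rewrite rpow_mul //; last lra.
  have := rpow_quad Hq xm0.
  have := rpow_ge0 mu q.
  set t := X g / mu; set r := rpow mu q; set s := rpow t q.
  move=> h1 h2.
  have -> : r * / mu * (t * mu) + - (r / (4 * mu * mu)) * (t * mu * (t * mu)) = (t - t * t / 4) * r.
    by field; lra.
  by apply: Rmult_le_compat_r.
apply: Rle_trans; last by apply: sumR_le; exact: pw.
rewrite sumR_split !sumR_scal.
have EX : \big[Rplus/0]_(g in G) X g = KG * m.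
  rewrite (eq_bigr _ (fun g _ => XE g)) first_moment //; rewrite /m /W; field; lra.
have EX2 : \big[Rplus/0]_(g in G) (X g * X g) <= KG * (c * (m * m)).
  rewrite (eq_bigr _ (fun g _ => f_equal2 Rmult (XE g) (XE g))).
  apply: Rle_trans; first exact: (@second_moment _ _ G CG KGpos NRpos H12 Rs Rs w w w0 w0).
  apply: Rmult_le_compat_l; first lra.
  apply: Rle_trans.
    apply: (@sumR_le _ _ _ _ (fun e => w e * ((m + CG * m) / NR))).
    move=> e eR; apply: Rmult_le_compat_l; first exact: w0.
    rewrite -/W.
    have -> : CG / (NR * NR) * W = CG * m / NR by rewrite /m; field; lra.
    have := wb e eR => hh.
    have -> : (m + CG * m) / NR = m / NR + CG * m / NR by field; lra.
    apply: Rplus_le_compat_r; rewrite /Rdiv; apply: Rmult_le_compat_r; [left; exact: Rinv_0_lt_compat|lra].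
  rewrite sumR_scalr -/W; right; rewrite /m /c; field; lra.
rewrite EX.
have r0 := rpow_ge0 mu q.
have hb : 0 <= rpow mu q / (4 * mu * mu).
  rewrite /Rdiv; apply: Rmult_le_pos => //; left; apply: Rinv_0_lt_compat; nra.
have h2 := Rmult_le_compat_l _ _ _ hb EX2.
have hm : rpow mu q = rpow (c / 2) q * rpow m q.
  rewrite /mu rpow_mul //; lra.
have hc2 : 1 / 2 <= rpow (c / 2) q.
  apply: Rle_trans; last by apply: rpow_small => //; lra.
  apply: Rmin_glb; rewrite /c; lra.
have rm0 := rpow_ge0 m q.
set P := \big[Rplus/0]_(i in G) (X i * X i) in h2 *.
set b := rpow mu q / (4 * mu * mu) in hb h2 *.
have : rpow mu q * KG / c <= rpow mu q * / mu * (KG * m) + - b * P.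
  have -> : rpow mu q * KG / c = rpow mu q * / mu * (KG * m) + - (rpow mu q / (4 * mu * mu)) * (KG * (c * (m * m))).
    rewrite /mu; field; split; lra.
  rewrite -/b; lra.
move=> h3. apply: Rle_trans; last exact: h3.
rewrite hm.
have hK := KGpos.
have : 0 <= rpow m q * KG / c.
  rewrite /Rdiv; apply: Rmult_le_pos; [nra|left; apply: Rinv_0_lt_compat; lra].
move=> h4.
have -> : rpow (c / 2) q * rpow m q * KG / c = rpow (c / 2) q * (rpow m q * KG / c) by field; lra.
have -> : KG * rpow m q / (2 * c) = 1 / 2 * (rpow m q * KG / c) by field; lra.
by apply: Rmult_le_compat_r.
Qed.


Lemma inv_q p : 1 <= p -> 0 < / p <= 1.
Proof.
move=> hp; split; first by apply: Rinv_0_lt_compat; lra.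
rewrite -Rinv_1; apply: Rinv_le_contravar; lra.
Qed.

Lemma upper (L : {pred T}) (v : T -> R) (p : R) :
  1 <= p -> (forall e, 0 <= v e) ->
  \big[Rplus/0]_(g in G) rpow (\big[Rplus/0]_(e : T) (rpow (v e) p * ind (hit g e))) (/ p)
  <= KG * ((\big[Rplus/0]_(e in L) v e) / NR
           + rpow ((\big[Rplus/0]_(e in [predC L]) rpow (v e) p) / NR) (/ p)).
Proof.
move=> hp v0.
have hq := inv_q hp.
pose TR g := \big[Rplus/0]_(e in [predC L]) (rpow (v e) p * ind (hit g e)).
have pw : forall g, g \in G ->
  rpow (\big[Rplus/0]_(e : T) (rpow (v e) p * ind (hit g e))) (/ p)
  <= \big[Rplus/0]_(e in L) (v e * ind (hit g e)) + rpow (TR g) (/ p).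
  move=> g _.
  have wp : forall e, 0 <= rpow (v e) p * ind (hit g e).
    by move=> e; apply: Rmult_le_pos; [exact: rpow_ge0|exact: ind_ge0].
  rewrite (bigID (fun e => e \in L)) /=.
  have -> : \big[Rplus/0]_(i | i \notin L) (rpow (v i) p * ind (hit g i)) = TR g.
    by rewrite /TR; apply: eq_bigl => e; rewrite inE.
  apply: Rle_trans; first apply: rpow_subadd => //.
  - by apply: sumR_ge0.
  - by rewrite /TR; apply: sumR_ge0.
  apply: Rplus_le_compat_r.
  apply: Rle_trans; first exact: rpow_sum_subadd.
  right; apply: eq_bigr => e _.
  rewrite /ind; case: (hit g e).
    rewrite Rmult_1_r rpow_inv //; lra.
  by rewrite !Rmult_0_r rpow0.
apply: Rle_trans; first by apply: sumR_le; exact: pw.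
rewrite sumR_split first_moment //.
have hK := KGpos.
apply: Rle_trans.
  apply: Rplus_le_compat_l.
  apply: (jensen TR hq).
  by move=> g _; rewrite /TR; apply: sumR_ge0 => e _; apply: Rmult_le_pos; [exact: rpow_ge0|exact: ind_ge0].
rewrite /TR first_moment //.
have -> : INR #|G| / NR * \big[Rplus/0]_(e in [predC L]) rpow (v e) p / INR #|G|
   = \big[Rplus/0]_(e in [predC L]) rpow (v e) p / NR by field; lra.
right; rewrite Rmult_plus_distr_l; congr (_ + _); rewrite /Rdiv; ring.
Qed.

End Core2.


Lemma Rgeb_total : total Rgeb.
Proof. move=> x y; rewrite /Rgeb; case: Rle_dec; case: Rle_dec => //= ? ?; lra. Qed.
Lemma Rgeb_trans : transitive Rgeb.
Proof. move=> x y z; rewrite /Rgeb; case: Rle_dec; case: Rle_dec => //=; case: Rle_dec => //= ? ? ?; lra. Qed.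
Lemma RgebP x y : Rgeb x y -> y <= x.
Proof. by rewrite /Rgeb; case: Rle_dec. Qed.

Lemma sort_split (n N : nat) (a : 'I_n -> 'I_N -> R) (e0 : 'I_n * 'I_N) :
  leq N (n * N) ->
  exists L : {set 'I_n * 'I_N},
  [/\ #|L| = N,
     \big[Rplus/0]_(0 <= k < N) s_at a k = \big[Rplus/0]_(e in L) Rabs (a e.1 e.2),
     forall f : R -> R, \big[Rplus/0]_(N <= k < n * N) f (s_at a k) =
                        \big[Rplus/0]_(e in [predC L]) f (Rabs (a e.1 e.2)) &
     forall e e', e \in L -> e' \notin L -> Rabs (a e'.1 e'.2) <= Rabs (a e.1 e.2)].
Proof.
move=> hN.
pose v (e : 'I_n * 'I_N) := Rabs (a e.1 e.2).
pose s0 := [seq (i, j) | i <- enum 'I_n, j <- enum 'I_N].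
pose P := sort (relpre v Rgeb) s0.
have sP : srearr a = map v P.
  rewrite /srearr /P -sort_map /s0 map_allpairs //.
have uP : uniq P.
  rewrite sort_uniq /s0; apply: allpairs_uniq; try exact: enum_uniq.
  by move=> [x1 y1] [x2 y2] _ _ /= [-> ->].
have mP : forall e, e \in P.
  move=> [i j]; rewrite mem_sort /s0; apply/allpairsP; exists (i, j); by rewrite !mem_enum.
have szP : size P = (n * N)%nat.
  by rewrite size_sort /s0 size_allpairs !size_enum_ord.
have soP : pairwise (relpre v Rgeb) P.
  rewrite -sorted_pairwise; last by move=> x y z; apply: Rgeb_trans.
  apply: sort_sorted => x y; exact: Rgeb_total.
have eP : P = take N P ++ drop N P by rewrite cat_take_drop.
have uTD : uniq (take N P ++ drop N P) by rewrite -eP.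
exists [set e in take N P]; split.
- rewrite cardsE; have /card_uniqP -> := take_uniq N uP.
  by rewrite size_takel // szP.
- have -> : \big[Rplus/0]_(e in [set e in take N P]) Rabs (a e.1 e.2) =
            \big[Rplus/0]_(e <- take N P) v e.
    rewrite big_uniq; last exact: take_uniq.
    by apply: eq_bigl => e; rewrite inE.
  rewrite [RHS](big_nth e0) size_takel ?szP //.
  apply: eq_big_nat => k /andP [_ hk].
  rewrite /s_at sP (nth_map e0) ?szP; last exact: leq_trans hk hN.
  by rewrite nth_take.
- move=> f.
  have -> : \big[Rplus/0]_(e in [predC [set e in take N P]]) f (Rabs (a e.1 e.2)) =
            \big[Rplus/0]_(e <- drop N P) f (v e).
    rewrite big_uniq; last exact: drop_uniq.
    apply: eq_bigl => e; rewrite !inE.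
    have := mP e; rewrite {1}eP mem_cat.
    move: uTD; rewrite cat_uniq => /and3P [_ /hasPn hd _].
    case he: (e \in drop N P); first by rewrite (hd e he).
    by rewrite orbF => ->.
  rewrite [RHS](big_nth e0) size_drop szP.
  rewrite -{1}(add0n N) big_addn.
  apply: eq_big_nat => k /andP [_ hk].
  rewrite /s_at sP (nth_map e0) ?szP; last by move: hk; clear; lia.
  by rewrite nth_drop addnC.
- move=> e e'; rewrite !inE => he he'.
  have he2 : e' \in drop N P.
    by have := mP e'; rewrite {1}eP mem_cat (negbTE he').
  move: soP; rewrite {1}eP pairwise_cat => /and3P [/allrelP H _ _].
  exact: RgebP (H e e' he he2).
Qed.

Unset Implicit Arguments.

Theorem theorem1p2 :
  forall CG : R, 0 < CG ->
  exists C : R, 0 < C /\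
  forall (n N : nat) (a : 'I_n -> 'I_N -> R) (p : R)
         (G : {set {ffun 'I_n -> 'I_N}}),
    1 <= p ->
    G != set0 ->
    (forall (i : 'I_n) (j : 'I_N),
        Prob G (fun g => g i == j) = 1 / INR N) ->
    (forall (i1 i2 : 'I_n) (j1 j2 : 'I_N), (i1, j1) <> (i2, j2) ->
        Prob G (fun g => (g i1 == j1) && (g i2 == j2)) <= CG / (INR N ^ 2)) ->
    C * bound_expr a p
      <= Expect G (fun g => rpow (\big[Rplus/0]_(i < n) rpow (Rabs (a i (g i))) p) (/ p))
    /\ Expect G (fun g => rpow (\big[Rplus/0]_(i < n) rpow (Rabs (a i (g i))) p) (/ p))
      <= bound_expr a p.
Proof.
move=> CG CG0.
exists (1 / (4 * (1 + CG))); split.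
  apply: Rdiv_lt_0_compat; lra.
move=> n N a p G hp HG H1' H2'.
have KGpos : 0 < INR #|G| by apply: lt_0_INR; apply/ltP; rewrite card_gt0.
case: n a G HG H1' H2' KGpos => [|n] a G HG H1' H2' KGpos.
  have Eb : bound_expr a p = 0.
    rewrite /bound_expr /s_at /srearr.
    have -> : [seq Rabs (a i j) | i <- enum 'I_0, j <- enum 'I_N] = [::].
      by apply/nilP; rewrite /nilp size_allpairs size_enum_ord.
    rewrite /= big1; last by move=> k _; case: k.
    rewrite big1; last by move=> k _; rewrite nth_nil rpow0.
    rewrite /Rdiv !Rmult_0_l rpow0; lra.
  have Ee : Expect G (fun g => rpow (\big[Rplus/0]_(i < 0) rpow (Rabs (a i (g i))) p) (/ p)) = 0.
    rewrite /Expect big1 ?(Rmult_0_l, Rdiv_0_l) //.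
    move=> g _; rewrite big_ord0 rpow0 //.
  rewrite Eb Ee; lra.
case: N a G HG H1' H2' KGpos => [|N] a G HG H1' H2' KGpos.
  by case/set0Pn: HG => g _; case: (g ord0).

set n1 := n.+1 in a G HG H1' H2' KGpos *.
set N1 := N.+1 in a G HG H1' H2' KGpos *.
have NRpos : 0 < INR N1 by apply: lt_0_INR; apply/ltP.
have hq := inv_q hp.
set KG := INR #|G| in KGpos *.
set NR := INR N1 in NRpos H1' H2' *.
have H1 : forall e : 'I_n1 * 'I_N1, INR #|[set g in G | hit g e]| = KG / NR.
  move=> e; have := H1' e.1 e.2; rewrite /Prob -/KG => h.
  have -> : INR #|[set g in G | hit g e]| = INR #|[set g in G | hit g e]| / KG * KG.
    by field; lra.
  by rewrite h; field; lra.
have H12 : forall e e' : 'I_n1 * 'I_N1,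
  INR #|[set g in G | hit g e && hit g e']| <= KG * (ind (e' == e) / NR + CG / (NR * NR)).
  move=> e e'; case: (eqVneq e' e) => [->|hne].
    have -> : [set g in G | hit g e && hit g e] = [set g in G | hit g e].
      by apply/setP => g; rewrite !inE andbb.
    rewrite H1 /ind /=.
    have : 0 <= KG * (CG / (NR * NR)).
      apply: Rmult_le_pos; first lra.
      rewrite /Rdiv; apply: Rmult_le_pos; first lra. left; apply: Rinv_0_lt_compat; nra.
    move=> h; have -> : KG * (1 / NR + CG / (NR * NR)) = KG / NR + KG * (CG / (NR * NR)) by field; lra.
    lra.
  have hne' : (e.1, e.2) <> (e'.1, e'.2).
    move=> heq; move/eqP: hne; apply; move: heq; case: e => [x1 y1]; case: e' => [x2 y2] /= [-> ->] //.
  have := H2' _ _ _ _ hne'; rewrite /Prob -/KG => h.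
  rewrite /ind.
  have -> : INR #|[set g in G | hit g e && hit g e']| =
            INR #|[set g in G | hit g e && hit g e']| / KG * KG by field; lra.
  have -> : KG * (0 / NR + CG / (NR * NR)) = CG / (NR ^ 2) * KG by field; lra.
  apply: Rmult_le_compat_r; [lra | exact: h].
have hN : leq N1 (n1 * N1) by rewrite leq_pmull.
have [L [hcard hA hB hmono]] := sort_split a (ord0, ord0) hN.
pose v (e : 'I_n1 * 'I_N1) := Rabs (a e.1 e.2).
have v0 : forall e, 0 <= v e by move=> e; exact: Rabs_pos.
set S := \big[Rplus/0]_(e in L) Rabs (a e.1 e.2) in hA.
set W := \big[Rplus/0]_(e in [predC L]) rpow (Rabs (a e.1 e.2)) p.
have Eb : bound_expr a p = S / NR + rpow (W / NR) (/ p).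
  by rewrite /bound_expr hA (hB (fun x => rpow x p)).
pose Mg g := rpow (\big[Rplus/0]_(e : 'I_n1 * 'I_N1) (rpow (v e) p * ind (hit g e))) (/ p).
have Ee : Expect G (fun g => rpow (\big[Rplus/0]_(i < n1) rpow (Rabs (a i (g i))) p) (/ p))
          = (\big[Rplus/0]_(g in G) Mg g) / KG.
  rewrite /Expect; congr (_ / _); apply: eq_bigr => g _; rewrite /Mg.
  by rewrite (conv_sum (fun i j => rpow (Rabs (a i j)) p)).
rewrite Eb Ee.
set E := \big[Rplus/0]_(g in G) Mg g.
have Mg0 : forall g, 0 <= Mg g by move=> g; exact: rpow_ge0.
have E0 : 0 <= E by apply: sumR_ge0.
split; last first.
  have := @upper _ _ G KGpos NRpos H1 L v p hp v0.
  rewrite -/E => h.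
  apply: (Rmult_le_reg_r KG) => //.
  have -> : E / KG * KG = E by field; lra.
  rewrite Rmult_comm; exact: h.

set c := 1 + CG.
have c0 : 0 < c by rewrite /c; lra.
have hA' : KG * S / (NR * c) <= E.
  apply: (@termA _ _ G CG KGpos NRpos CG0 H1 H12 L v Mg v0).
  - by rewrite hcard; lra.
  - by move=> g _; exact: Mg0.
  move=> g e _ _ hh.
  rewrite /Mg -{1}(rpow_inv (v0 e) (Rlt_le_trans _ _ _ Rlt_0_1 hp)).
  apply: rpow_le; first lra.
  split; first exact: rpow_ge0.
  have -> : rpow (v e) p = rpow (v e) p * ind (hit g e) by rewrite /ind hh; lra.
  apply: (@sumR_term _ xpredT (fun e => rpow (v e) p * ind (hit g e)) e) => // e' _.
  apply: Rmult_le_pos; [exact: rpow_ge0|exact: ind_ge0].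
set x := S / NR.
set y := rpow (W / NR) (/ p).
set z := E / KG.
have S0 : 0 <= S by apply: sumR_ge0 => e _; exact: Rabs_pos.
have x0 : 0 <= x by rewrite /x /Rdiv; apply: Rmult_le_pos; [lra|left; apply: Rinv_0_lt_compat; lra].
have hx : x <= c * z.
  rewrite /x /z.
  have -> : S / NR = (KG * S / (NR * c)) * (c / KG) by field; lra.
  have -> : c * (E / KG) = E * (c / KG) by field; lra.
  apply: Rmult_le_compat_r => //.
  rewrite /Rdiv; apply: Rmult_le_pos; [lra|left; apply: Rinv_0_lt_compat; lra].
have avg : forall e', e' \notin L -> v e' <= x.
  move=> e' he'.
  have : NR * v e' <= S.
    rewrite /S.
    have -> : NR * v e' = \big[Rplus/0]_(e in L) v e' by rewrite sumR_const hcard /NR; lra.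
    apply: sumR_le => e he; exact: hmono.
  move=> h; rewrite /x.
  apply: (Rmult_le_reg_l NR) => //.
  have -> : NR * (S / NR) = S by field; lra.
  exact: h.
have key : y <= 2 * c * z \/ y <= x.
  case: (Rle_dec (W / NR) 0) => hm.
    left; rewrite /y /rpow; case: Rle_dec => //= _.
    have : 0 <= z by rewrite /z /Rdiv; apply: Rmult_le_pos; [lra|left; apply: Rinv_0_lt_compat; lra].
    nra.
  have hm' : 0 < W / NR by lra.
  case: (Rle_dec (rpow x p) (W / NR)) => hb.
    left.
    have hB' := @termB _ _ G CG KGpos NRpos CG0 H1 H12 [predC L] (fun e => rpow (v e) p)
       (rpow x p) (/ p) (fun g => \big[Rplus/0]_(e in [predC L]) (rpow (v e) p * ind (hit g e)))
       hq (fun e => rpow_ge0 _ _).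
    have hB'' := hB' _ (fun g => erefl) hm' hb.
    clear hB'.
    have : KG * y / (2 * c) <= E.
      apply: Rle_trans; first apply: hB''.
        move=> e; rewrite inE => he; apply: rpow_le; first lra.
        split; [exact: v0 | exact: avg].
      apply: sumR_le => g _; rewrite /Mg; apply: rpow_le; first lra.
      split; first by apply: sumR_ge0 => e _; apply: Rmult_le_pos; [exact: rpow_ge0|exact: ind_ge0].
      rewrite [X in _ <= X](bigID (fun e => e \in L)) /=.
      have -> : \big[Rplus/0]_(e in [predC L]) (rpow (v e) p * ind (hit g e)) =
                \big[Rplus/0]_(e | e \notin L) (rpow (v e) p * ind (hit g e)).
        by apply: eq_bigl => e; rewrite inE.
      have : 0 <= \big[Rplus/0]_(e | e \in L) (rpow (v e) p * ind (hit g e)).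
        by apply: sumR_ge0 => e _; apply: Rmult_le_pos; [exact: rpow_ge0|exact: ind_ge0].
      move=> _; set Q := \big[Rplus/0]_(e | e \notin L) _; rewrite -{1}(Rplus_0_l Q); apply: Rplus_le_compat_r; apply: sumR_ge0 => e _; apply: Rmult_le_pos; [exact: rpow_ge0|exact: ind_ge0].
    move=> h; rewrite /z.
    have -> : 2 * c * (E / KG) = E * (2 * c / KG) by field; lra.
    have -> : y = KG * y / (2 * c) * (2 * c / KG) by field; lra.
    apply: Rmult_le_compat_r => //.
    rewrite /Rdiv; apply: Rmult_le_pos; [lra|left; apply: Rinv_0_lt_compat; lra].
  right; rewrite /y.
  rewrite -(rpow_inv x0 (Rlt_le_trans _ _ _ Rlt_0_1 hp)).
  apply: rpow_le; first lra.
  lra.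
have z0 : 0 <= z by rewrite /z /Rdiv; apply: Rmult_le_pos; [lra|left; apply: Rinv_0_lt_compat; lra].
have y0 : 0 <= y by exact: rpow_ge0.
have hxy : x + y <= 4 * c * z by case: key => ?; nra.
have -> : 1 / (4 * (1 + CG)) * (x + y) = (x + y) / (4 * c) by rewrite /c; field; lra.
apply: (Rmult_le_reg_r (4 * c)); first lra.
have -> : (x + y) / (4 * c) * (4 * c) = x + y by field; lra.
lra.
Qed.
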